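(* Let $D=(V,E;s,t)$, $N$ be as in the context and let $\widetilde\Gamma_D=(N,\tilde\gamma)$ be the auxiliary game. Then $\mathcal{C}(\widetilde\Gamma_D)$ is the convex hull of the incidence vectors (in $\mathbb{R}^N$) of the minimum $s$-$t$ cuts constrained to $N$.
   Context: $D=(V,E;s,t)$ is a directed network with unit arc capacities (parallel arcs allowed); $N\subseteq E$ is the set of private arcs (players), $M=E\setminus N$ public arcs; every $s$-$t$ path contains an arc of $N$ and every arc lies on some $s$-$t$ path. For $S\subseteq N$, $\gamma(S)$ is the maximum number of pairwise arc-disjoint $s$-$t$ paths in $D_S=(V,S\cup M;s,t)$. $\sigma_N$ is the maximum number of $s$-$t$ paths pairwise sharing no arc of $N$. An $s$-$t$ cut constrained to $N$ is a set of arcs contained in $N$ meeting every $s$-$t$ path; it is minimum if of minimum cardinality. The auxiliary game $\widetilde\Gamma_D=(N,\tilde\gamma)$ has $\tilde\gamma(N)=\sigma_N$ and $\tilde\gamma(S)=\gamma(S)$ for $S\subsetneq N$. $\mathcal{C}(\widetilde\Gamma_D)=\{x\in\mathbb{R}^N_{\ge0}:x(N)=\sigma_N,\ x(S)\ge\tilde\gamma(S)\ \forall S\subseteq N\}$, where $x(S)=\sum_{i\in S}x_i$. *)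

(* Defs.v *)
From mathcomp Require Import all_boot all_order all_algebra.
From mathcomp Require Import boolp reals.
Set Implicit Arguments. Unset Strict Implicit. Unset Printing Implicit Defensive.
Import Order.TTheory GRing.Theory Num.Theory.

(* A directed multigraph: finite vertex type V, finite arc type E (parallel arcs
   allowed: distinct arcs may share endpoints), arc e goes from src e to tgt e.
   Every arc has unit capacity. *)

Section Network.
Variables (V E : finType) (src tgt : E -> V) (s t : V).

Fixpoint walk_to_t (v : V) (p : seq E) : bool :=
  if p is e :: p' then (src e == v) && walk_to_t (tgt e) p' else v == t.

Definition st_path (p : seq E) : bool :=
  walk_to_t s p && uniq (s :: map tgt p).

Definition st_path_in (A : {set E}) (p : seq E) : bool :=
  st_path p && all (mem A) p.

Definition has_disjoint_paths (A : {set E}) (k : nat) : Prop :=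
  exists P : seq (seq E),
    size P = k /\ all (st_path_in A) P /\
    (forall i j, i < size P -> j < size P -> i != j ->
       [disjoint (mem (nth [::] P i)) & (mem (nth [::] P j))]).

Definition has_N_disjoint_paths (N : {set E}) (k : nat) : Prop :=
  exists P : seq (seq E),
    size P = k /\ all st_path P /\
    (forall i j, i < size P -> j < size P -> i != j ->
       [disjoint [predI (mem (nth [::] P i)) & mem N] &
                 [predI (mem (nth [::] P j)) & mem N]]).

(* Under the
   standing hypotheses (s <> t) every such family has at most #|E| members,
   so the bounded maximum below is the true maximum. *)
Definition maxflow (A : {set E}) : nat :=
  \max_(k < #|E|.+1 | `[< has_disjoint_paths A k >]) k.

(* gamma(S) = maximum number of arc-disjoint s-t paths in D_S = (V, S u M) *)
Definition gamma (N S : {set E}) : nat := maxflow (S :|: ~: N).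

(* sigma_N (at most |N| <= |E| under the standing hypotheses) *)
Definition sigmaN (N : {set E}) : nat :=
  \max_(k < #|E|.+1 | `[< has_N_disjoint_paths N k >]) k.

Definition gamma_tilde (N S : {set E}) : nat :=
  if S == N then sigmaN N else gamma N S.

Definition N_cut (N C : {set E}) : Prop :=
  C \subset N /\ forall p, st_path p -> has (mem C) p.

Definition min_N_cut (N C : {set E}) : Prop :=
  N_cut N C /\ forall C', N_cut N C' -> #|C| <= #|C'|.

(* players = private arcs *)
Definition player (N : {set E}) := {e : E | e \in N}.

Variable R : realType.
Local Open Scope ring_scope.

Definition xsum (N : {set E}) (x : {ffun player N -> R}) (S : {set E}) : R :=
  \sum_(i : player N | val i \in S) x i.

Definition incid (N : {set E}) (C : {set E}) : {ffun player N -> R} :=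
  [ffun i : player N => if val i \in C then 1 else 0].

Definition in_core (N : {set E}) (x : {ffun player N -> R}) : Prop :=
  (forall i, 0 <= x i) /\ xsum x N = (sigmaN N)%:R /\
  (forall S : {set E}, S \subset N -> (gamma_tilde N S)%:R <= xsum x S).

Definition in_conv_min_cuts (N : {set E}) (x : {ffun player N -> R}) : Prop :=
  exists lam : {set E} -> R,
    (forall C, 0 <= lam C) /\
    (forall C, lam C != 0 -> min_N_cut N C) /\
    \sum_(C : {set E}) lam C = 1 /\
    forall i : player N, x i = \sum_(C : {set E}) lam C * incid N C i.

End Network.

(* Main.v *)
Require Import Defs.
From mathcomp Require Import all_boot all_order all_algebra.
From mathcomp Require Import boolp reals.
From mathcomp Require Import ring lra zify.
Import Order.TTheory GRing.Theory Num.Theory.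
Set Implicit Arguments. Unset Strict Implicit. Unset Printing Implicit Defensive.

Section Walks.
Variables (V E : finType) (src tgt : E -> V).

Fixpoint wk (u : V) (p : seq E) (w : V) : bool :=
  if p is e :: p' then (src e == u) && wk (tgt e) p' w else u == w.

Lemma walk_wk t u p : walk_to_t src tgt t u p = wk u p t.
Proof. by elim: p u => //= e p IH u; rewrite IH. Qed.

Lemma wk_last u p w : wk u p w -> last u (map tgt p) = w.
Proof. by elim: p u => /= [|e p IH] u; [move/eqP | case/andP => _ /IH]. Qed.

Lemma wk_cat u p q w :
  wk u (p ++ q) w = wk u p (last u (map tgt p)) && wk (last u (map tgt p)) q w.
Proof.
elim: p u => /= [|e p IH] u; first by rewrite eqxx.
by rewrite IH andbA.
Qed.

Lemma wk_rcons u p e w : wk u (rcons p e) w = wk u p (src e) && (tgt e == w).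
Proof.
rewrite -cats1 wk_cat /=.
case: (boolP (wk u p (src e))) => H2.
  by rewrite (wk_last H2) eqxx H2.
case: (boolP (src e == last u [seq tgt i | i <- p])) => /= [/eqP H3|_].
  by rewrite -H3 (negbTE H2).
by rewrite andbF.
Qed.

Lemma wk_cross (A : pred V) u p w : wk u p w -> A u -> ~~ A w ->
  has (fun e => A (src e) && ~~ A (tgt e)) p.
Proof.
elim: p u => /= [|e p IH] u; first by move/eqP ->; move=> ->.
case/andP => /eqP -> H Au Aw.
case: (boolP (A (tgt e))) => At; last by rewrite Au.
by rewrite (IH _ H At Aw) orbT.
Qed.

Lemma wk_drop a q w i : wk a q w -> i < size q ->
  wk (nth a (map tgt q) i) (drop i.+1 q) w.
Proof.
elim: q a i => //= e q IH a [|i] /andP[_ H] Hi /=; first by rewrite drop0.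
by rewrite (set_nth_default (tgt e)) ?size_map //; apply: IH.
Qed.

Lemma wk_shortcut u p w : wk u p w ->
  exists2 q, wk u q w & uniq (u :: map tgt q) /\ subseq q p.
Proof.
elim: p u => [|e p IH] u.
  by move=> H; exists [::] => //; rewrite sub0seq.
move=> /andP [/eqP Hs /IH [q Hq [Hu Hsub]]].
have Hsub' : subseq q (e :: p) by exact: (subseq_trans Hsub (subseq_cons _ _)).
case: (boolP (u \in tgt e :: map tgt q)) => Hin; last first.
  exists (e :: q); first by rewrite /= Hs eqxx Hq.
  split; first by rewrite map_cons cons_uniq Hin Hu.
  by rewrite /= eqxx.
rewrite in_cons in Hin; case/orP: Hin => [/eqP Hut|Hin].
  exists q; first by rewrite Hut.
  by split; [rewrite Hut|].
set i := index u (map tgt q).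
have Hi : i < size q by rewrite -(size_map tgt) index_mem.
exists (drop i.+1 q).
  by have := wk_drop Hq Hi; rewrite nth_index.
split; last exact: (subseq_trans (drop_subseq _ _) Hsub').
have Hq' : uniq (map tgt q) by case/andP: Hu.
have := drop_uniq i Hq'.
rewrite (drop_nth u) ?size_map // nth_index // -map_drop //.
Qed.
End Walks.

Section Dual.
Variables (V E : finType) (src tgt : E -> V) (s t : V).

Lemma count_cut (P : seq (seq E)) (C : {set E}) :
  (forall i, i < size P -> has (mem C) (nth [::] P i)) ->
  (forall i j, i < size P -> j < size P -> i != j -> forall e, e \in C ->
      e \in nth [::] P i -> e \in nth [::] P j -> False) ->
  size P <= #|C|.
Proof.
case: P => [|p0 P'] // Hhit Hdis.
have [e0 _ _] : exists2 e0, e0 \in C & e0 \in p0.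
  by have /hasP [e He1 He2] := Hhit 0 isT; exists e.
set n := size (p0 :: P').
pose f (i : 'I_n) := odflt e0 [pick e in C | e \in nth [::] (p0 :: P') i].
have Hf i : f i \in C /\ f i \in nth [::] (p0 :: P') i.
  rewrite /f; case: pickP => [e /andP [H1 H2] //|H].
  have /hasP [e He1 He2] := Hhit i (ltn_ord i).
  by have := H e; rewrite He1 andbT; move: He2; rewrite /mem /= => ->.
have finj : injective f.
  move=> i j Hij; apply/eqP; apply/negPn/negP => Hne.
  have [H1 H2] := Hf i; have [_ H3] := Hf j.
  by apply: (Hdis i j (ltn_ord i) (ltn_ord j) Hne (f i) H1 H2); rewrite Hij.
have -> : n = #|[set f i | i in 'I_n]| by rewrite card_imset // card_ord.
apply: subset_leq_card; apply/subsetP => e /imsetP [i _ ->].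
by case: (Hf i).
Qed.

Lemma cutN_ge (N C : {set E}) : N_cut src tgt s t N C -> (sigmaN src tgt s t N <= #|C|)%N.
Proof.
case=> HCN Hcut; apply/bigmax_leqP => k /asboolP [P [HP [Hall Hdis]]].
rewrite -HP; apply: count_cut.
  by move=> i Hi; apply: Hcut; apply: (allP Hall); rewrite mem_nth.
move=> i j Hi Hj Hne e HeC Hei Hej.
have HeN := subsetP HCN e HeC.
have := disjointFr (Hdis i j Hi Hj Hne) (_ : e \in [predI mem (nth [::] P i) & mem N]).
by rewrite !inE Hej HeN => /(_ (introT andP (conj Hei isT))).
Qed.

Lemma cut_gamma_ge (N C S : {set E}) : N_cut src tgt s t N C ->
  (gamma src tgt s t N S <= #|C :&: S|)%N.
Proof.
case=> HCN Hcut; apply/bigmax_leqP => k /asboolP [P [HP [Hall Hdis]]].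
rewrite -HP; apply: count_cut.
  move=> i Hi; have /andP [Hst Hin] := allP Hall _ (mem_nth [::] Hi).
  have /hasP [e He1 He2] := Hcut _ Hst.
  have HeC : e \in C by []. apply/hasP; exists e => //.
  suff : e \in C :&: S by []. rewrite inE HeC /=.
  have : e \in S :|: ~: N := allP Hin e He1. by rewrite !inE (subsetP HCN e HeC) orbF.
move=> i j Hi Hj Hne e HeC Hei Hej.
by have := disjointFr (Hdis i j Hi Hj Hne) Hei; rewrite Hej.
Qed.

End Dual.

Section Flow.
Variables (V E : finType) (src tgt : E -> V) (s t : V) (N : {set E}).
Hypothesis hst : s != t.
Local Open Scope ring_scope.

Definition ind (b : bool) : int := if b then 1 else 0.

Definition ex (f : E -> int) (v : V) : int :=
  \sum_e f e * (ind (src e == v) - ind (tgt e == v)).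

Definition res (f : E -> int) (u v : V) : bool :=
  [exists e, ((src e == u) && (tgt e == v) && ((e \notin N) || (f e == 0)))
          || ((tgt e == u) && (src e == v) && (0 < f e))].

Definition sup (f : E -> int) (u v : V) : bool :=
  [exists e, (src e == u) && (tgt e == v) && (0 < f e)].

Definition fb (f : E -> int) := (forall e, 0 <= f e) /\ (forall e, e \in N -> f e <= 1).

Definition isflow (f : E -> int) (k : nat) :=
  fb f /\ (forall v, v != s -> v != t -> ex f v = 0) /\ ex f s = k%:Z.

Lemma sum_ind (A : {set V}) u : \sum_(v in A) ind (u == v) = ind (u \in A).
Proof.
case: (boolP (u \in A)) => Hu.
  rewrite (bigD1 u) //= eqxx big1 ?addr0 // => v /andP[_ Hv].
  by rewrite eq_sym (negbTE Hv).
rewrite big1 // => v Hv; case: eqP => // Huv.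
by rewrite Huv Hv in Hu.
Qed.

Lemma ex_sumR f (A : {set V}) :
  \sum_(v in A) ex f v = \sum_e f e * (ind (src e \in A) - ind (tgt e \in A)).
Proof.
rewrite exchange_big; apply: eq_bigr => e _.
by rewrite -mulr_sumr sumrB !sum_ind.
Qed.

Lemma ex_flow_set f k (A : {set V}) : isflow f k -> s \in A -> t \notin A ->
  \sum_(v in A) ex f v = k%:Z.
Proof.
move=> [_ [Hc Hs]] HsA HtA.
rewrite (bigD1 s) //= Hs big1 ?addr0 // => v /andP [HvA Hvs].
apply: Hc => //; apply/negP => /eqP Hvt; by rewrite -Hvt HvA in HtA.
Qed.

Lemma ex_upd f e c v :
  ex (fun a => f a + c * ind (a == e)) v = ex f v + c * (ind (src e == v) - ind (tgt e == v)).
Proof.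
rewrite /ex (eq_bigr (fun a => f a * (ind (src a == v) - ind (tgt a == v))
   + c * ind (a == e) * (ind (src a == v) - ind (tgt a == v)))); last first.
  by move=> a _; rewrite mulrDl.
rewrite big_split /=; congr (_ + _).
rewrite (bigD1 e) //= eqxx big1 ?addr0 /ind /=; first by rewrite mulr1.
by move=> a /negbTE ->; rewrite mulr0 mul0r.
Qed.

Lemma ex_walk f u q w v : wk src tgt u q w -> uniq q ->
  ex (fun a => f a - ind (a \in q)) v = ex f v - (ind (u == v) - ind (w == v)).
Proof.
move=> Hw Hu.
rewrite /ex (eq_bigr (fun a => f a * (ind (src a == v) - ind (tgt a == v))
   - ind (a \in q) * (ind (src a == v) - ind (tgt a == v)))); last first.
  by move=> a _; rewrite mulrBl.
rewrite sumrB; congr (_ - _).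
have -> : \sum_i ind (i \in q) * (ind (src i == v) - ind (tgt i == v)) =
          \sum_(i <- q) (ind (src i == v) - ind (tgt i == v)).
  symmetry; rewrite big_uniq // big_mkcond /=; apply: eq_bigr => a _.
  by rewrite /ind; case: (a \in q); rewrite ?mul1r ?mul0r.
elim: q u Hw {Hu} => [|e q IH] u /=; first by move/eqP ->; rewrite big_nil subrr.
rewrite big_cons; case/andP => /eqP <- /IH ->.
by rewrite /ind; case: (src e == v); case: (tgt e == v); case: (w == v).
Qed.


Lemma aug_step f u v1 : fb f -> res f u v1 -> u != v1 ->
  exists f1, [/\ fb f1,
    (forall v, ex f1 v = ex f v + (ind (u == v) - ind (v1 == v))) &
    (forall a, src a != u -> tgt a != u -> f1 a = f a)].
Proof.
move=> [H0 H1] /existsP [e /orP [/andP [/andP [/eqP Hs /eqP Ht] Hc]|/andP [/andP [/eqP Ht /eqP Hs] Hc]]] Huv.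
- exists (fun a => f a + 1 * ind (a == e)); split.
  + split => a; rewrite /ind; case: eqP => [->|_]; rewrite ?mulr1 ?mulr0 ?addr0 //.
    * by rewrite addr_ge0.
    * move=> HN; case/orP: Hc => [HnN|/eqP ->]; first by rewrite HN in HnN.
      by [].
    * exact: H1.
  + by move=> v; rewrite ex_upd mul1r Hs Ht.
  + move=> a Ha _; rewrite /ind; case: eqP => [Hae|]; last by rewrite addr0.
    by rewrite Hae Hs eqxx in Ha.
- exists (fun a => f a + (-1) * ind (a == e)); split.
  + split => a; rewrite /ind; case: eqP => [->|_]; rewrite ?mulr1 ?mulr0 ?addr0 //.
    * by rewrite subr_ge0.
    * move=> HN; rewrite lerBlDr; apply: (le_trans (H1 _ HN)); by rewrite lerDl.
    * exact: H1.
  + move=> v; rewrite ex_upd Hs Ht; by rewrite mulN1r opprB.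
  + move=> a _ Ha; rewrite /ind; case: eqP => [Hae|]; last by rewrite addr0.
    by rewrite Hae Ht eqxx in Ha.
Qed.

Lemma aug f u p : fb f -> path (res f) u p -> uniq (u :: p) ->
  exists f', fb f' /\ forall v, ex f' v = ex f v + (ind (u == v) - ind (last u p == v)).
Proof.
elim: p u f => [|v1 p IH] u f Hf /=.
  by move=> _ _; exists f; split => // v; rewrite subrr addr0.
case/andP => Hr Hp /andP [Hu Huq].
have Huv : u != v1 by apply: contraNneq Hu => ->; rewrite in_cons eqxx.
have [f1 [Hf1 Hex1 Heq1]] := aug_step Hf Hr Huv.
have Hp1 : path (res f1) v1 p.
  apply: (sub_in_path (P := predC1 u)) _ _ Hp; last first.
    apply/allP => x; rewrite in_cons => /orP [/eqP ->|Hx] /=; first by rewrite eq_sym.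
    by apply: contraNneq Hu => <-; rewrite in_cons Hx orbT.
  move=> x y; rewrite !inE => Hx Hy /existsP [a Ha]; apply/existsP; exists a.
  move: Ha; case/orP => /andP [/andP [/eqP Hsa /eqP Hta] Hc].
    by rewrite Heq1 ?Hsa ?Hta // !eqxx Hc.
  by rewrite Heq1 ?Hsa ?Hta // !eqxx Hc orbT.
have [f' [Hf' Hex']] := IH v1 f1 Hf1 Hp1 Huq.
exists f'; split => // v; rewrite Hex' Hex1.
ring.
Qed.


Lemma sum_ind_card (C : {set E}) : \sum_e ind (e \in C) = #|C|%:Z.
Proof.
rewrite -big_mkcondr /= /ind.
by rewrite sumr_const natz.
Qed.

Lemma flow_step f (j : nat) : isflow f j ->
  (forall C, N_cut src tgt s t N C -> (j < #|C|)%N) -> exists f', isflow f' j.+1.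
Proof.
move=> Hfl Hcut.
have [Hfb [Hc Hs]] := Hfl.
set R := [set v | connect (res f) s v].
have HsR : s \in R by rewrite inE connect0.
case: (boolP (t \in R)) => HtR.
  have [p' [Hp' Hu Hl]] : exists p', [/\ path (res f) s p', uniq (s :: p') & last s p' = t].
    move: HtR; rewrite inE => /connectP [p Hp Hl]; rewrite Hl.
    by case/shortenP: Hp => p' ? ? _; exists p'.
  have [f' [Hf' Hex]] := aug Hfb Hp' Hu.
  exists f'; split => //; split.
    move=> v Hvs Hvt; rewrite Hex Hc // Hl /ind eq_sym (negbTE Hvs) eq_sym (negbTE Hvt).
    by rewrite subrr.
  rewrite Hex Hs Hl eqxx /ind eq_sym (negbTE hst) subr0. lia.
exfalso.
set C := [set e | (src e \in R) && (tgt e \notin R)].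
have Hres u v : u \in R -> res f u v -> v \in R.
  rewrite !inE => Hu Huv; apply: (connect_trans Hu); exact: connect1.
have HC : N_cut src tgt s t N C.
  split.
    apply/subsetP => e; rewrite inE => /andP [H1 H2].
    apply: contraR H2 => HeN; apply: (Hres _ _ H1); apply/existsP; exists e.
    by rewrite !eqxx HeN.
  move=> p /andP [Hp _]; rewrite walk_wk in Hp.
  have := wk_cross (A := mem R) Hp HsR HtR.
  apply: sub_has => e /= He; by rewrite inE.
have := Hcut C HC.
have : \sum_(v in R) ex f v = #|C|%:Z.
  rewrite ex_sumR -sum_ind_card; apply: eq_bigr => e _.
  have -> : (e \in C) = (src e \in R) && (tgt e \notin R) by rewrite /C inE.
  case: (boolP (src e \in R)) => Hse; case: (boolP (tgt e \in R)) => Hte /=;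
    rewrite /ind ?subrr ?mulr0 //.
  - rewrite subr0 mulr1.
    have HeN : e \in N.
      apply: contraR Hte => HeN; apply: (Hres _ _ Hse); apply/existsP; exists e.
      by rewrite !eqxx HeN.
    have Hf0 : f e != 0.
      apply: contra Hte => Hf0; apply: (Hres _ _ Hse); apply/existsP; exists e.
      by rewrite !eqxx Hf0 orbT.
    have := Hfb.1 e; have := Hfb.2 e HeN; move: Hf0; lia.
  - have -> : f e = 0; last by rewrite mul0r.
    apply/eqP; apply: contraNT Hse => Hf0; apply: (Hres _ _ Hte); apply/existsP; exists e.
    have := Hfb.1 e; rewrite !eqxx /= => H0; apply/orP; right; lia.
rewrite (ex_flow_set Hfl HsR HtR) => /eqP; rewrite eqz_nat => /eqP ->.
by rewrite ltnn.
Qed.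


Lemma sup_arcs f u vp : path (sup f) u vp ->
  exists q, [/\ wk src tgt u q (last u vp), map tgt q = vp & all (fun e => 0 < f e) q].
Proof.
elim: vp u => [|v vp IH] u /=; first by move=> _; exists [::]; rewrite /= eqxx.
case/andP => /existsP [e /andP [/andP [/eqP Hs /eqP Ht] Hf]] /IH [q [Hq Hm Ha]].
exists (e :: q); split => /=; first by rewrite Hs eqxx Ht.
  by rewrite Ht Hm.
by rewrite Hf.
Qed.

Definition Ndisj (P : seq (seq E)) :=
  forall i j, (i < size P)%N -> (j < size P)%N -> i != j ->
       [disjoint [predI (mem (nth [::] P i)) & mem N] &
                 [predI (mem (nth [::] P j)) & mem N]].

Lemma decomp k f : isflow f k -> exists P : seq (seq E),
  [/\ size P = k, all (st_path src tgt s t) P, Ndisj P &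
      forall p e, p \in P -> e \in p -> e \in N -> 0 < f e].
Proof.
elim: k f => [|k IH] f Hfl; first by exists [::]; split => //; case.
have [Hfb [Hc Hs]] := Hfl.
set R := [set v | connect (sup f) s v].
have HsR : s \in R by rewrite inE connect0.
have HtR : t \in R.
  apply/negPn/negP => HtR.
  have := ex_flow_set Hfl HsR HtR.
  rewrite ex_sumR => Hsum.
  have : \sum_e f e * (ind (src e \in R) - ind (tgt e \in R)) <= 0.
    apply: sumr_le0 => e _.
    case: (boolP (src e \in R)) => Hse; case: (boolP (tgt e \in R)) => Hte;
      rewrite /ind ?subrr ?mulr0 //.
    - have -> : f e = 0; last by rewrite mul0r.
      apply/eqP; apply: contraNT Hte => Hf0.
      move: Hse; rewrite !inE => Hse; apply: (connect_trans Hse); apply: connect1.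
      apply/existsP; exists e; rewrite !eqxx /=.
      have := Hfb.1 e; move: Hf0; timeout 10 lia.
    - rewrite sub0r mulrN1 oppr_le0; exact: Hfb.1.
  by rewrite Hsum.
have [vp [Hp Hu Hl]] : exists vp, [/\ path (sup f) s vp, uniq (s :: vp) & last s vp = t].
  move: HtR; rewrite inE => /connectP [p Hp Hl]; rewrite Hl.
  by case/shortenP: Hp => p' ? ? _; exists p'.
have [q [Hq Hm Hpos]] := sup_arcs Hp.
rewrite Hl in Hq.
have Hst : st_path src tgt s t q by rewrite /st_path walk_wk Hq Hm Hu.
have Hqu : uniq q by move: Hu => /andP [_]; rewrite -Hm; apply: map_uniq.
pose f1 := fun a => f a - ind (a \in q).
have Hfl1 : isflow f1 k.
  split; [split|split].
  - move=> a; rewrite /f1 /ind; case: (boolP (a \in q)) => Ha; last by rewrite subr0; exact: Hfb.1.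
    have := allP Hpos a Ha => /=; timeout 10 lia.
  - move=> a Ha; rewrite /f1 /ind; have := Hfb.2 a Ha; have := Hfb.1 a.
    case: (a \in q) => H0 H1; [by rewrite lerBlDr (le_trans H1) // lerDl | by rewrite subr0].
  - move=> v Hvs Hvt; rewrite /f1 (ex_walk _ _ Hq Hqu) Hc //.
    rewrite /ind eq_sym (negbTE Hvs) eq_sym (negbTE Hvt). by rewrite !subr0.
  - rewrite /f1 (ex_walk _ _ Hq Hqu) Hs /ind eqxx eq_sym (negbTE hst). by rewrite subr0 -addn1 PoszD addrK.
have [P [HsP HaP HdP HpP]] := IH f1 Hfl1.
have Hpos1 p e : p \in P -> e \in p -> e \in N -> e \notin q.
  move=> Hp1 He HeN; have := HpP p e Hp1 He HeN; rewrite /f1 /ind.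
  have := Hfb.2 e HeN; case: (e \in q) => // H1; rewrite subr_gt0 => H2.
  by have := lt_le_trans H2 H1; rewrite ltxx.
have Hdq p : p \in P -> [disjoint [predI mem q & mem N] & [predI mem p & mem N]].
  move=> Hp1; rewrite disjoint_subset; apply/subsetP => e; rewrite !inE => /andP [Heq HeN].
  apply/negP => /andP [Hep _]; by have := Hpos1 p e Hp1 Hep HeN; rewrite Heq.
exists (q :: P); split => /=.
- by rewrite HsP.
- by rewrite Hst HaP.
- move=> [|i] [|j] //= Hi Hj Hij.
  + by apply: Hdq; apply: mem_nth.
  + by rewrite disjoint_sym; apply: Hdq; apply: mem_nth.
  + by apply: HdP.
- move=> p e; rewrite in_cons => /orP [/eqP ->|Hp1] He HeN.
    exact: (allP Hpos e He).
  have := HpP p e Hp1 He HeN; rewrite /f1 /ind; case: (e \in q) => H; last by rewrite subr0 in H.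
  by apply: (lt_trans H); rewrite ltrBlDr ltrDl ltr01.
Qed.

Lemma menger k : (forall C, N_cut src tgt s t N C -> (k <= #|C|)%N) ->
  has_N_disjoint_paths src tgt s t N k.
Proof.
move=> Hcut.
have : forall j, (j <= k)%N -> exists f, isflow f j.
  elim=> [|j IHj] Hj.
    exists (fun _ => 0); split; [split => //|split].
    - by move=> v _ _; rewrite /ex big1 // => e _; rewrite mul0r.
    - by rewrite /ex big1 // => e _; rewrite mul0r.
  have [f Hf] := IHj (ltnW Hj).
  apply: (flow_step Hf) => C HC; exact: (leq_trans Hj (Hcut C HC)).
move=> /(_ k (leqnn k)) [f Hf].
have [P [H1 H2 H3 _]] := decomp Hf.
by exists P.
Qed.

End Flow.

Section PartD.
Local Open Scope ring_scope.

Section Dist.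
Variables (R : realType) (V E : finType) (src tgt : E -> V) (s t : V).
Variable (w : E -> R).
Hypothesis w_ge0 : forall e, 0 <= w e.

Definition wt (p : seq E) : R := \sum_(e <- p) w e.

Lemma wt_ge0 p : 0 <= wt p.
Proof. by apply: sumr_ge0 => e _; exact: w_ge0. Qed.

Lemma wt_subseq q p : subseq q p -> wt q <= wt p.
Proof.
elim: p q => [|e p IH] [|y q] //=.
- move=> _; rewrite [wt [::]]/wt big_nil; exact: wt_ge0.
- case: eqP => [->|_] H.
    by rewrite /wt !big_cons lerD2l; apply: IH.
  rewrite [wt (e :: p)]/wt big_cons; apply: (le_trans (IH _ H)); rewrite lerDr; exact: w_ge0.
Qed.

Lemma fm_le_init (a : R) l : foldr Num.min a l <= a.
Proof. by elim: l => //= y l IH; rewrite ge_min IH orbT. Qed.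

Lemma fm_le_mem (a y : R) l : y \in l -> foldr Num.min a l <= y.
Proof.
elim: l => //= z l IH; rewrite in_cons => /orP [/eqP ->|Hy].
  by rewrite ge_min lexx.
by rewrite ge_min IH ?orbT.
Qed.

Lemma fm_ge (c a : R) l : (forall y, y \in l -> c <= y) -> c <= a -> c <= foldr Num.min a l.
Proof.
elim: l => //= z l IH H Ha; rewrite le_min H ?mem_head // IH //.
by move=> y Hy; apply: H; rewrite in_cons Hy orbT.
Qed.

Lemma fm_cases (a : R) l : foldr Num.min a l = a \/ foldr Num.min a l \in l.
Proof.
elim: l => [|z l IH] /=; first by left.
rewrite /Num.min; case: ifP => _; first by right; rewrite mem_head.
by case: IH => [->|H]; [left|right; rewrite in_cons H orbT].
Qed.

Fixpoint D (k : nat) (v : V) : R :=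
  if k is k'.+1 then
    foldr Num.min (D k' v) [seq D k' (src e) + w e | e <- [seq e <- enum E | tgt e == v]]
  else if v == s then 0 else 1.

Lemma D_ge0 k v : 0 <= D k v.
Proof.
elim: k v => [|k IH] v /=; first by case: (v == s).
apply: fm_ge => // y /mapP [e _ ->]; by rewrite addr_ge0.
Qed.

Lemma D_le1 k v : D k v <= 1.
Proof.
elim: k v => [|k IH] v /=; first by case: (v == s).
exact: (le_trans (fm_le_init _ _) (IH v)).
Qed.

Lemma D_s k : D k s = 0.
Proof.
elim: k => [|k IH] /=; first by rewrite eqxx.
apply/eqP; rewrite eq_le; apply/andP; split; [rewrite -[X in _ <= X]IH; exact: fm_le_init | exact: (D_ge0 k.+1 s)].
Qed.

Lemma D_tri k e : D k.+1 (tgt e) <= D k (src e) + w e.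
Proof.
apply: fm_le_mem; apply/mapP; exists e => //.
by rewrite mem_filter eqxx mem_enum.
Qed.

Lemma D_walk k v : D k v < 1 -> exists2 p, wk src tgt s p v & wt p <= D k v.
Proof.
elim: k v => [|k IH] v /=.
  case: eqP => [->|_]; last by rewrite ltxx.
  by move=> _; exists [::]; rewrite /= ?eqxx // /wt big_nil.
case: (fm_cases (D k v) [seq D k (src e) + w e | e <- [seq e <- enum E | tgt e == v]]) => [Heq|Hin].
  rewrite Heq; exact: IH.
case/mapP: Hin => e; rewrite mem_filter => /andP [/eqP Hte _] Hm; rewrite Hm => H.
have H1 : D k (src e) < 1 by apply: le_lt_trans H; rewrite lerDl.
have [p Hp Hwt] := IH _ H1.
exists (rcons p e); first by rewrite wk_rcons Hp Hte eqxx.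
by rewrite /wt -cats1 big_cat big_seq1 lerD2r.
Qed.

Lemma D_lb k v p : wk src tgt s p v -> (size p <= k)%N -> D k v <= wt p.
Proof.
elim: k v p => [|k IH] v p.
  by case: p => //= /eqP <- _; rewrite eqxx /wt big_nil.
case/lastP: p => [|p e].
  move=> H _; have Hsv : s = v by apply/eqP. by rewrite -Hsv D_s /wt big_nil.
rewrite wk_rcons size_rcons ltnS => /andP [Hp /eqP <-] Hs.
apply: (le_trans (D_tri k e)).
by rewrite /wt -cats1 big_cat big_seq1 lerD2r; apply: IH.
Qed.

Definition d v := D #|V| v.

Lemma d_lb v p : wk src tgt s p v -> d v <= wt p.
Proof.
move=> /wk_shortcut [q Hq [Hu Hsub]].
apply: (le_trans _ (wt_subseq Hsub)); apply: (@D_lb #|V| v q Hq).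
have := max_card (mem (s :: map tgt q)); rewrite (card_uniqP Hu) /= size_map.
by move/ltnW.
Qed.

Lemma d_tri e : d (tgt e) <= d (src e) + w e.
Proof.
case: (boolP (d (src e) < 1)) => H.
  have [p Hp Hwt] := D_walk H.
  apply: (le_trans (d_lb (p := rcons p e) _)); first by rewrite wk_rcons Hp eqxx.
  by rewrite /wt -cats1 big_cat big_seq1 lerD2r.
rewrite -leNgt in H; apply: (le_trans (D_le1 _ _)).
by apply: (le_trans H); rewrite lerDl.
Qed.

Lemma d_t : (forall q, st_path src tgt s t q -> 1 <= wt q) -> d t = 1.
Proof.
move=> Hq; apply/eqP; rewrite eq_le D_le1 /=; rewrite leNgt; apply/negP => H.
have [p Hp Hwt] := D_walk H.
have [q Hq' [Hu Hsub]] := wk_shortcut Hp.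
have : 1 <= wt q by apply: Hq; rewrite /st_path walk_wk Hq' Hu.
move=> H1; have := le_trans H1 (le_trans (wt_subseq Hsub) Hwt).
by rewrite leNgt H.
Qed.

End Dist.

End PartD.

Section PartE.
Local Open Scope ring_scope.

Lemma sum_window (R : realType) (f : nat -> R) n a b : (a <= b)%N -> (b <= n)%N ->
  \sum_(j < n) (f j.+1 - f j) * ((a <= j)%N && (j < b)%N)%:R = f b - f a.
Proof.
move=> Hab Hbn.
rewrite -(big_mkord xpredT (fun j => (f j.+1 - f j) * ((a <= j)%N && (j < b)%N)%:R)).
rewrite (big_cat_nat (leq0n a) (leq_trans Hab Hbn)) /=.
rewrite (big_cat_nat Hab Hbn) /=.
rewrite big1_seq ?add0r; last first.
  by move=> j /andP [_]; rewrite mem_index_iota => /andP [_ Hj]; rewrite leqNgt Hj mulr0.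
rewrite [X in _ + X]big1_seq ?addr0; last first.
  by move=> j /andP [_]; rewrite mem_index_iota => /andP [Hj _]; rewrite ltnNge Hj andbF mulr0.
rewrite -(telescope_sumr (fun j => f j) Hab).
by apply: eq_big_nat => j /andP [H1 H2]; rewrite H1 H2 mulr1.
Qed.

Section Thresh.
Variables (R : realType) (V E : finType) (src tgt : E -> V) (s t : V) (N : {set E}).
Variables (w : E -> R) (d : V -> R) (sigma : nat).
Hypotheses (w_ge0 : forall e, 0 <= w e) (wN : forall e, e \notin N -> w e = 0).
Hypotheses (d_s : d s = 0) (d_t : d t = 1) (d_ge0 : forall v, 0 <= d v) (d_le1 : forall v, d v <= 1).
Hypothesis d_tri : forall e, d (tgt e) <= d (src e) + w e.
Hypothesis cut_ge : forall C, N_cut src tgt s t N C -> (sigma <= #|C|)%N.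
Hypothesis w_sum : \sum_e w e = sigma%:R.

Definition l := sort <=%R (undup (map d (enum V))).
Definition m := size l.

Lemma l_sorted : sorted <%R l.
Proof. by rewrite /l sort_lt_sorted undup_uniq. Qed.

Lemma mem_l y : (y \in l) = (y \in map d (enum V)).
Proof. by rewrite /l mem_sort mem_undup. Qed.

Lemma d_in_l v : d v \in l.
Proof. by rewrite mem_l; apply: map_f; rewrite mem_enum. Qed.

Lemma nth_l_range j : (j < m)%N -> 0 <= nth 0 l j <= 1.
Proof.
move=> Hj; have : nth 0 l j \in l by apply: mem_nth.
by rewrite mem_l => /mapP [v _ ->]; rewrite d_ge0 d_le1.
Qed.

Lemma m_gt0 : (0 < m)%N.
Proof. by have := d_in_l s; rewrite /m; case: l. Qed.

Lemma l_leq i j : (i < m)%N -> (j < m)%N -> (nth 0 l i <= nth 0 l j) = (i <= j)%N.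
Proof. by move=> Hi Hj; rewrite (lt_sorted_leq_nth 0 l_sorted). Qed.

Lemma l_ltn i j : (i < m)%N -> (j < m)%N -> (nth 0 l i < nth 0 l j) = (i < j)%N.
Proof. by move=> Hi Hj; rewrite (lt_sorted_ltn_nth 0 l_sorted). Qed.

Definition idx v := index (d v) l.
Lemma idx_lt v : (idx v < m)%N. Proof. by rewrite /idx /m index_mem d_in_l. Qed.
Lemma nth_idx v : nth 0 l (idx v) = d v. Proof. by rewrite nth_index // d_in_l. Qed.

Lemma l_first : nth 0 l 0 = 0.
Proof.
apply/eqP; rewrite eq_le; have /andP [-> _] := nth_l_range m_gt0; rewrite andbT.
have H := l_leq m_gt0 (idx_lt s); rewrite nth_idx d_s in H.
by rewrite H.
Qed.

Lemma l_last : nth 0 l m.-1 = 1.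
Proof.
have Hm : (m.-1 < m)%N by rewrite prednK ?m_gt0.
apply/eqP; rewrite eq_le; have /andP [_ ->] := nth_l_range Hm; rewrite /=.
have H := l_leq (idx_lt t) Hm; rewrite nth_idx d_t in H.
by rewrite H -ltnS prednK ?m_gt0 ?idx_lt.
Qed.

Definition lam (j : nat) := nth 0 l j.+1 - nth 0 l j.
Definition Cj (j : nat) := [set e | (d (src e) <= nth 0 l j) && (nth 0 l j < d (tgt e))].

Lemma lam_gt0 (j : 'I_m.-1) : 0 < lam j.
Proof.
have Hj : (j.+1 < m)%N by have := ltn_ord j; have := m_gt0; lia.
by rewrite /lam subr_gt0 l_ltn // (ltn_trans _ Hj).
Qed.

Lemma Cj_cut (j : 'I_m.-1) : N_cut src tgt s t N (Cj j).
Proof.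
have Hj : (j.+1 < m)%N by have := ltn_ord j; have := m_gt0; lia.
have Hj' : (j < m)%N by rewrite (ltn_trans _ Hj).
split.
  apply/subsetP => e; rewrite inE => /andP [H1 H2]; apply/negPn/negP => HeN.
  have := d_tri e; rewrite wN // addr0 => H3.
  by have := lt_le_trans H2 (le_trans H3 H1); rewrite ltxx.
move=> p /andP [Hp _]; rewrite walk_wk in Hp.
have := wk_cross (A := fun v => d v <= nth 0 l j) Hp.
rewrite d_s d_t; have /andP [-> _] := nth_l_range Hj'.
have Hlt : nth 0 l j < 1.
  have Hm : (m.-1 < m)%N by have := m_gt0; lia.
  by rewrite -l_last l_ltn ?ltn_ord.
rewrite -ltNge Hlt => /(_ isT isT); apply: sub_has => e /andP [H1 H2].
suff : e \in Cj j by []. by rewrite inE H1 ltNge H2.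
Qed.

Definition g e := \sum_(j < m.-1) lam j * (e \in Cj j)%:R.

Lemma g_le e : g e <= w e.
Proof.
have Ha := idx_lt (src e); have Hb := idx_lt (tgt e).
rewrite /g (eq_bigr (fun j : 'I_m.-1 => lam j * ((idx (src e) <= j)%N && (j < idx (tgt e))%N)%:R)); last first.
  move=> j _; have Hj : (j < m)%N by rewrite (leq_trans (ltn_ord j)) // leq_pred.
  by rewrite inE -{1}(nth_idx (src e)) -(nth_idx (tgt e)) l_leq // l_ltn.
case: (leqP (idx (tgt e)) (idx (src e))) => Hab.
  rewrite big1 ?w_ge0 // => j _.
  case: (leqP (idx (src e)) j) => H1 //=; last by rewrite mulr0.
  by rewrite ltnNge (leq_trans Hab H1) mulr0.
rewrite (sum_window (fun j => nth 0 l j) (ltnW Hab)); last by rewrite -ltnS prednK ?m_gt0.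
rewrite !nth_idx lerBlDl; first [exact: d_tri | rewrite addrC; exact: d_tri].
Qed.

Lemma card_sumR (C : {set E}) : \sum_e (e \in C)%:R = #|C|%:R :> R.
Proof.
rewrite (eq_bigr (fun e => if e \in C then 1 else 0)); last by move=> e _; case: (e \in C).
by rewrite -big_mkcond sumr_const.
Qed.

Lemma sum_g : \sum_e g e = \sum_(j < m.-1) lam j * (#|Cj j|)%:R.
Proof.
rewrite /g exchange_big /=; apply: eq_bigr => j _.
by rewrite -mulr_sumr card_sumR.
Qed.

Lemma sum_lam : \sum_(j < m.-1) lam j = 1.
Proof.
rewrite -(big_mkord xpredT lam) telescope_sumr ?leq0n //.
by rewrite l_last l_first subr0.
Qed.

Lemma g_eq e : g e = w e.
Proof.
have H1 : \sum_e (w e - g e) = 0.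
  rewrite sumrB w_sum sum_g; apply/eqP; rewrite subr_eq0 eq_le; apply/andP; split.
    have H : \sum_(j < m.-1) lam j * sigma%:R <= \sum_(j < m.-1) lam j * (#|Cj j|)%:R.
      apply: ler_sum => j _; rewrite ler_pM2l ?lam_gt0 // ler_nat.
      exact: cut_ge (Cj_cut j).
    by rewrite -mulr_suml sum_lam mul1r in H.
  by rewrite -w_sum -sum_g; apply: ler_sum => e' _; apply: g_le.
apply/eqP; rewrite eq_sym -subr_eq0; apply/eqP.
by apply: (psumr_eq0P _ H1) => // e' _; rewrite subr_ge0 g_le.
Qed.

Lemma card_Cj (j : 'I_m.-1) : #|Cj j| = sigma.
Proof.
have H1 : \sum_(j < m.-1) lam j * ((#|Cj j|)%:R - sigma%:R) = 0.
  rewrite (eq_bigr (fun j : 'I_m.-1 => lam j * (#|Cj j|)%:R - lam j * sigma%:R)); last first.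
    by move=> i _; rewrite mulrBr.
  rewrite sumrB -sum_g -mulr_suml sum_lam mul1r -w_sum.
  by rewrite (eq_bigr _ (fun e _ => g_eq e)) subrr.
have := psumr_eq0P _ H1 (i := j) isT.
have Hnn : forall i : 'I_m.-1, true -> 0 <= lam i * ((#|Cj i|)%:R - sigma%:R).
  move=> i _; rewrite mulr_ge0 ?(ltW (lam_gt0 i)) // subr_ge0 ler_nat.
  exact: cut_ge (Cj_cut i).
move=> /(_ Hnn) /eqP; rewrite mulf_eq0 (gt_eqF (lam_gt0 j)) /= subr_eq0 => /eqP.
by move/eqP; rewrite eqr_nat => /eqP.
Qed.

Lemma thresh_decomp : exists lamC : {set E} -> R,
  [/\ forall C, 0 <= lamC C,
      forall C, lamC C != 0 -> min_N_cut src tgt s t N C,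
      \sum_(C : {set E}) lamC C = 1 &
      forall e, w e = \sum_(C : {set E}) lamC C * (if e \in C then 1 else 0)].
Proof.
exists (fun C => \sum_(j < m.-1 | Cj j == C) lam j); split.
- by move=> C; apply: sumr_ge0 => j _; exact: ltW (lam_gt0 j).
- move=> C HC.
  have [j /eqP HjC] : exists j : 'I_m.-1, Cj j == C.
    apply/existsP; apply: contraR HC => /existsPn Hn.
    by rewrite big_pred0 // => j; apply/negbTE; exact: Hn.
  rewrite -HjC; split; first exact: Cj_cut.
  by move=> C' HC'; rewrite card_Cj; exact: cut_ge.
- rewrite -sum_lam (partition_big (fun j : 'I_m.-1 => Cj j) xpredT) //.
- move=> e; rewrite -g_eq /g (partition_big (fun j : 'I_m.-1 => Cj j) xpredT) //=.
  apply: eq_bigr => C _; rewrite mulr_suml; apply: eq_bigr => j /eqP ->.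
  by case: (e \in C).
Qed.

End Thresh.

End PartE.

Section PartF.
Local Open Scope ring_scope.

Section Main.
Variables (R : realType) (V E : finType) (src tgt : E -> V) (s t : V) (N : {set E}).

Lemma sum_player (G : E -> R) (P : pred E) :
  \sum_(i : player N | P (val i)) G (val i) = \sum_(e | P e && (e \in N)) G e.
Proof.
rewrite big_mkcond /= -(big_sub (mem N) (fun e => if P e then G e else 0)).
by rewrite big_mkcondl /=; apply: eq_bigl.
Qed.


Variable (x : {ffun player N -> R}).

Definition xe (e : E) : R := if (insub e : option (player N)) is Some i then x i else 0.

Lemma xe_val i : xe (val i) = x i.
Proof. by rewrite /xe valK. Qed.

Lemma xe_out e : e \notin N -> xe e = 0.
Proof. by move=> H; rewrite /xe insubN. Qed.

Lemma xsumE (S : {set E}) : xsum x S = \sum_(e | (e \in S) && (e \in N)) xe e.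
Proof.
rewrite /xsum -(sum_player xe (fun e => e \in S)).
by apply: eq_bigr => i _; rewrite xe_val.
Qed.

Lemma xsumN_all : xsum x N = \sum_e xe e.
Proof.
rewrite xsumE (bigID (fun e => e \in N) predT) /= [X in _ + X]big1 ?addr0.
  by apply: eq_bigl => e; rewrite andbb.
by move=> e He; rewrite xe_out.
Qed.

Hypothesis hst : s != t.

Lemma st_path_nonnil q : st_path src tgt s t q -> q != [::].
Proof. by case: q => //; rewrite /st_path /= (negbTE hst). Qed.

Lemma gt_one (S : {set E}) q : st_path src tgt s t q -> {subset q <= S :|: ~: N} ->
  (1 <= gamma_tilde src tgt s t N S)%N.
Proof.
move=> Hq Hsub.
have HE : (1 < #|E|.+1)%N.
  rewrite ltnS; case: q Hq {Hsub} (st_path_nonnil Hq) => // e q _ _.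
  by apply/card_gt0P; exists e.
rewrite /gamma_tilde; case: eqP => _.
  apply: (leq_trans _ (leq_bigmax_cond (Ordinal HE) _)) => //.
  apply/asboolP; exists [:: q]; split => //; split; first by rewrite /= Hq.
  by move=> [|i] [|j].
apply: (leq_trans _ (leq_bigmax_cond (Ordinal HE) _)) => //.
apply/asboolP; exists [:: q]; split => //; split.
  by rewrite /= /st_path_in Hq /= andbT; apply/allP.
by move=> [|i] [|j].
Qed.


Lemma core_to_conv : in_core src tgt s t x -> in_conv_min_cuts src tgt s t x.
Proof.
case=> Hx0 [HxN Hcore].
have w_ge0 : forall e, 0 <= xe e.
  by move=> e; rewrite /xe; case: insub => // i; exact: Hx0.
have Hpath : forall q, st_path src tgt s t q -> 1 <= wt xe q.
  move=> q Hq.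
  set S := N :&: [set e | e \in q].
  have Hsub : {subset q <= S :|: ~: N}.
    by move=> e He; rewrite !inE He andbT; case: (e \in N).
  have H1 := gt_one Hq Hsub.
  have H2 := Hcore S (subsetIl _ _).
  have Hu : uniq q by move: Hq => /andP [_ /andP [_ /map_uniq]].
  have -> : wt xe q = xsum x S.
    rewrite xsumE /wt (big_uniq _ Hu) big_mkcond [RHS]big_mkcond /=.
    apply: eq_bigr => e _; rewrite !inE.
    case: (boolP (e \in N)) => HeN; first by rewrite andbT.
    by rewrite !andbF xe_out //; case: (e \in q).
  apply: le_trans H2; by rewrite ler1n.
have Hd_t := d_t w_ge0 Hpath.
have Hsum : \sum_e xe e = (sigmaN src tgt s t N)%:R by rewrite -xsumN_all.
have [lamC [H1 H2 H3 H4]] := thresh_decomp (d := d src tgt s xe) w_ge0 xe_out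
  (D_s _ _ _ w_ge0 _) Hd_t (D_ge0 _ _ _ w_ge0 _) (D_le1 _ _ _ _ _) (d_tri _ _ _ w_ge0)
  (@cutN_ge _ _ _ _ _ _ _) Hsum.
exists lamC; split => //; split => //; split => // i.
rewrite -xe_val H4; apply: eq_bigr => C _; by rewrite ffunE.
Qed.

Lemma cnt_eq (C S : {set E}) : C \subset N ->
  \sum_(e | (e \in S) && (e \in N)) (e \in C)%:R = #|C :&: S|%:R :> R.
Proof.
move=> HCN; rewrite -card_sumR big_mkcond /=; apply: eq_bigr => e _.
rewrite inE; case: (boolP (e \in C)) => HeC /=; last by case: (_ && _).
by rewrite (subsetP HCN e HeC) andbT; case: (e \in S).
Qed.

Lemma conv_to_core : in_conv_min_cuts src tgt s t x -> in_core src tgt s t x.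
Proof.
case=> lam [H0 [Hmin [Hsum Hx]]].
have Hcard : forall C, min_N_cut src tgt s t N C -> #|C| = sigmaN src tgt s t N.
  move=> C [HC Hmin']; apply/eqP; rewrite eqn_leq cutN_ge // andbT.
  have HEb : (#|C| < #|E|.+1)%N by rewrite ltnS max_card.
  apply: (leq_trans _ (leq_bigmax_cond (Ordinal HEb) _)) => //.
  by apply/asboolP; have := menger hst Hmin'.
have Hxs : forall S, xsum x S =
    \sum_(C : {set E}) lam C * \sum_(e | (e \in S) && (e \in N)) (e \in C)%:R.
  move=> S; rewrite /xsum (eq_bigr _ (fun i _ => Hx i)) exchange_big /=.
  apply: eq_bigr => C _; rewrite -mulr_sumr; congr (_ * _).
  rewrite -(sum_player (fun e => (e \in C)%:R) (fun e => e \in S)).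
  by apply: eq_bigr => i _; rewrite ffunE; case: (val i \in C).
split.
  move=> i; rewrite Hx; apply: sumr_ge0 => C _; apply: mulr_ge0 => //.
  by rewrite ffunE; case: (val i \in C).
split.
  rewrite Hxs (eq_bigr (fun C => lam C * (sigmaN src tgt s t N)%:R)).
    by rewrite -mulr_suml Hsum mul1r.
  move=> C _; case: (eqVneq (lam C) 0) => [->|Hne]; first by rewrite !mul0r.
  have Hm := Hmin C Hne; rewrite cnt_eq ?Hm.1.1 //.
  by rewrite (setIidPl Hm.1.1) Hcard.
move=> S HSN; rewrite Hxs.
suff H : \sum_C lam C * (gamma_tilde src tgt s t N S)%:R <=
         \sum_C lam C * \sum_(e | (e \in S) && (e \in N)) (e \in C)%:R.
  by rewrite -mulr_suml Hsum mul1r in H.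
apply: ler_sum => C _; case: (eqVneq (lam C) 0) => [->|Hne]; first by rewrite !mul0r.
have Hm := Hmin C Hne; rewrite (cnt_eq S Hm.1.1).
have Hpos : 0 < lam C by rewrite lt_def Hne H0.
rewrite ler_pM2l // ler_nat /gamma_tilde; case: eqP => [->|_].
  by rewrite (setIidPl Hm.1.1) Hcard.
exact: cut_gamma_ge Hm.1.
Qed.

End Main.

End PartF.

Unset Implicit Arguments.
Local Open Scope ring_scope.

Theorem lemma6 (R : realType) (V E : finType) (src tgt : E -> V) (s t : V)
    (N : {set E})
    (hN : forall p, st_path src tgt s t p -> has (mem N) p)
    (hE : forall e : E, exists2 p, st_path src tgt s t p & e \in p) :
  forall x : {ffun player N -> R},
    in_core src tgt s t x <-> in_conv_min_cuts src tgt s t x.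
Proof.
move=> x.
have hst : s != t.
  apply/negP => /eqP Hst; have := hN [::].
  by rewrite /st_path /= Hst eqxx /= => /(_ isT).
split; [exact: (core_to_conv hst) | exact: (conv_to_core hst)].
Qed.
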